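(* Let \(\mathcal{G}=\langle x,y,t \mid x^7, y^2, (xy)^3, [x,y]^4, t^2, [t^{x^2},yx^{-1}], [t,y], (yt^{x^2})^5, (xyx^2t^x)^5, (xt)^8\rangle\). Then \(|\mathcal{G}|\ge 443{,}520\).
   Context: Conventions: \(a^g=g^{-1}ag\) and \([a,b]=a^{-1}b^{-1}ab\). *)

(* Defs.v *)
From mathcomp Require Import all_boot.
Set Implicit Arguments. Unset Strict Implicit. Unset Printing Implicit Defensive.

Record group := Group {
  carrier :> Type;
  gmul : carrier -> carrier -> carrier;
  gone : carrier;
  ginv : carrier -> carrier;
  gmulA : forall a b c, gmul a (gmul b c) = gmul (gmul a b) c;
  gmul1 : forall a, gmul gone a = a;
  gmulV : forall a, gmul (ginv a) a = gone
}.

Section Ops.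
Variable G : group.
Fixpoint gpow (a : G) (n : nat) : G :=
  match n with O => gone G | S k => gmul a (gpow a k) end.
Definition gconj (a g : G) : G := gmul (gmul (ginv g) a) g.
Definition gcomm (a b : G) : G :=
  gmul (gmul (gmul (ginv a) (ginv b)) a) b.

Definition rels (x y t : G) : Prop :=
  gpow x 7 = gone G /\ gpow y 2 = gone G /\ gpow (gmul x y) 3 = gone G /\
  gpow (gcomm x y) 4 = gone G /\ gpow t 2 = gone G /\
  gcomm (gconj t (gpow x 2)) (gmul y (ginv x)) = gone G /\
  gcomm t y = gone G /\
  gpow (gmul y (gconj t (gpow x 2))) 5 = gone G /\
  gpow (gmul (gmul (gmul x y) (gpow x 2)) (gconj t x)) 5 = gone G /\
  gpow (gmul x t) 8 = gone G.
End Ops.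

Definition is_hom (G H : group) (f : G -> H) : Prop :=
  forall a b, f (gmul a b) = gmul (f a) (f b).

(* (G; x, y, t) is the group presented by < x, y, t | rels >, characterized
   by its universal property: the relations hold, and every triple satisfying
   the relations in any group H is the image of (x,y,t) under a unique
   homomorphism G -> H. *)
Definition is_presented (G : group) (x y t : G) : Prop :=
  rels x y t /\
  forall (H : group) (a b c : H), rels a b c ->
    exists f : G -> H, [/\ is_hom f, f x = a, f y = b, f t = c &
      forall g : G -> H, is_hom g -> g x = a -> g y = b -> g t = c ->
        forall z, g z = f z].

(* Main.v *)
Require Import Defs.
From mathcomp Require Import all_boot.
From mathcomp Require Import fingroup perm.
From mathcomp Require Import zify.
Set Implicit Arguments. Unset Strict Implicit. Unset Printing Implicit Defensive.

(* We exhibit a quotient of the presented group inside Sym(22)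
   (it is M22, of order 443520) and 443520 words with distinct images. *)

Definition tX : seq nat := [:: 10; 6; 8; 4; 19; 9; 16; 11; 1; 2; 20; 3; 13; 7; 14; 18; 5; 15; 0; 12; 21; 17].
Definition tY : seq nat := [:: 0; 1; 9; 11; 19; 5; 6; 12; 16; 2; 15; 3; 7; 14; 13; 10; 8; 21; 18; 4; 20; 17].
Definition tT : seq nat := [:: 0; 1; 7; 8; 17; 5; 6; 2; 3; 12; 13; 16; 9; 10; 15; 14; 11; 4; 18; 21; 20; 19].
Definition U1s : seq (seq nat) :=
  [:: [::];
  [:: 0; 2; 0; 2; 0; 0];
  [:: 0; 2; 0; 2];
  [:: 0; 2; 0; 0; 0];
  [:: 0; 0; 0; 0; 2];
  [:: 0; 2; 0; 0; 2; 0];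
  [:: 0; 2; 0; 2; 0; 0; 0];
  [:: 0; 2; 0];
  [:: 0; 2; 0; 2; 0];
  [:: 0; 2; 0; 1; 2];
  [:: 0];
  [:: 0; 2; 0; 0];
  [:: 0; 2; 0; 1];
  [:: 0; 2];
  [:: 0; 1; 2];
  [:: 0; 1];
  [:: 0; 2; 0; 0; 2];
  [:: 0; 0; 0; 0];
  [:: 0; 1; 0];
  [:: 0; 0; 0; 2];
  [:: 0; 0];
  [:: 0; 0; 0]].
Definition U2s : seq (seq nat) :=
  [:: [::];
  [:: 0; 1; 0; 0; 0; 0; 0; 1; 0; 0; 0];
  [:: 0; 0; 0; 1; 0; 0; 0; 2];
  [:: 0; 2; 0; 0; 0; 0; 2; 0; 0; 0];
  [:: 0; 1; 0; 0];
  [:: 0; 0; 2; 0; 0; 0; 0; 0; 0; 2; 0; 0; 2; 0; 0; 2; 1; 0; 0; 0; 0; 0; 0; 2; 0; 0; 0; 0; 0; 0];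
  [:: 0; 2; 0; 2; 0; 0; 0; 0; 2; 0; 0; 0; 0; 0; 2; 0; 0; 0; 0; 0; 0];
  [:: 0; 0; 0; 1; 0; 0; 0];
  [:: 0; 0; 1; 0; 0; 0; 0; 0];
  [:: 0; 2; 0; 0; 0; 2; 0; 0; 0; 0; 0; 0; 2; 0; 0; 0; 0; 0; 0; 2; 0; 0; 0; 0; 0; 0];
  [:: 0; 1; 2; 0; 2; 1; 0; 0; 0; 0; 0; 0];
  [:: 0; 2; 0; 0; 2; 0; 2; 0; 0; 0; 0; 0; 0; 2; 0; 0; 0; 0; 0; 2; 0; 0; 0; 0; 0; 0];
  [:: 0; 0; 2; 0; 0; 0; 0; 0];
  [:: 0; 1; 0; 0; 0; 2; 0; 1; 2; 0; 2; 0; 0; 0; 0; 0; 0; 2; 0; 0; 0; 0; 0; 0];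
  [:: 0; 0; 0; 0; 2; 0; 2; 0; 0; 0; 0];
  [:: 0; 0; 0; 0; 1; 0; 0; 0; 0];
  [:: 0; 1; 0; 0; 0; 2; 0; 1; 0; 2; 0; 0; 0; 0; 0; 0];
  [:: 0; 1; 0; 0; 0; 2; 0; 2; 0; 1; 2; 0; 0; 0; 0; 0; 2; 0; 0; 0; 0; 0; 0];
  [:: 0; 1; 0; 2; 0; 0; 0; 0; 0; 0; 1; 0; 0; 0; 0; 0; 0];
  [:: 0; 2; 0; 0; 2; 0; 0; 2; 1; 0; 0; 0; 0; 0; 0; 2; 0; 0; 0; 0; 0; 0];
  [:: 0; 2; 0; 0; 2; 0; 1; 0; 0; 0; 0; 0; 0; 2; 0; 0; 0; 0; 0; 2; 0; 0; 0; 0; 0; 0]].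
Definition U3s : seq (seq nat) :=
  [:: [::];
  [:: 0; 2; 0; 2; 0; 0; 0; 0; 2; 0; 0; 0; 0; 0; 2; 0; 1; 2; 0; 0; 0; 0; 0];
  [:: 0; 1; 0; 0; 2; 0; 0; 0; 0; 0; 1; 0; 0; 0; 0; 0; 0];
  [:: 0; 1; 0; 2; 0; 0; 0; 0; 0; 0; 1; 0; 0; 0; 2; 0; 2; 0; 0; 0; 0];
  [:: 0; 1; 2; 0; 2; 1; 0; 0; 0; 0; 0; 0; 2; 0; 0; 0; 1; 0; 0; 0];
  [:: 2];
  [:: 0; 0; 0; 0; 0; 1; 0; 0; 0; 0; 1; 0; 0; 0; 0; 0; 0];
  [:: 1];
  [:: 1; 0; 0; 0; 0; 1; 0; 0; 0; 0; 0; 2; 0; 0; 0; 0; 2; 0; 1; 0; 0; 0; 0; 0; 0];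
  [:: 0; 0; 1; 0; 2; 0; 1; 0; 0; 0; 0; 0; 0; 2; 0; 0; 0; 1; 0; 0; 0; 0];
  [:: 0; 1; 0; 2; 0; 2; 0; 0; 0; 0; 1; 0; 0; 0; 0];
  [:: 1; 0; 0; 0; 1; 0; 0; 0; 2; 0; 1; 0; 0; 0; 0; 2; 0; 0; 0; 0; 0];
  [:: 0; 1; 0; 0; 0; 2; 0; 1; 0; 2; 0; 0; 0; 2; 0; 2; 1; 0; 0; 0];
  [:: 0; 1; 0; 0; 0; 2; 0; 0; 0; 0; 2; 0; 0; 0; 0; 0; 0; 1; 0; 0; 0];
  [:: 0; 1; 2; 0; 2; 1; 2; 0; 0; 0; 0; 2; 1; 0; 0; 0; 0];
  [:: 0; 0; 0; 1; 0; 0; 0; 0; 1; 2; 0; 2; 1; 0; 0; 0; 0; 0; 0];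
  [:: 0; 1; 2; 0; 2; 1; 2; 0; 2; 0; 2; 0; 0; 0; 0; 2; 0; 2; 0; 0; 0; 0; 0];
  [:: 0; 0; 2; 0; 0; 0; 1; 0; 0; 0; 0; 0; 0; 2; 0; 0; 0; 0; 1; 0; 0; 0; 0];
  [:: 1; 0; 0; 0; 0; 1; 0; 0; 0; 0; 0; 0; 2; 0; 0; 2; 0; 0; 0; 2; 0; 0; 0; 0; 0; 0];
  [:: 0; 2; 0; 2; 0; 2; 0; 0; 0; 0; 2; 0; 0; 1; 0; 0; 0]].
Definition U4s : seq (seq nat) :=
  [:: [::];
  [:: 0; 2; 0; 1; 0; 2; 0; 0; 0; 1; 0; 0; 0; 0; 1];
  [:: 0; 0; 2; 0; 0; 0; 0; 0; 0; 2; 0; 1; 0; 2; 0; 0; 1; 0; 0; 0];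
  [:: 0; 0; 0; 1; 2; 0; 2; 0; 0; 0; 0; 2; 0; 0; 0; 0; 1; 0; 0; 0; 0];
  [:: 2; 0; 2; 0; 0; 0; 0; 0; 2; 0; 0; 0; 0; 0; 0; 2; 0; 0; 0; 0; 0; 2];
  [:: 0; 0; 0; 0; 0; 1; 2; 0; 0; 0; 0; 2; 0; 0; 0; 0; 0; 0; 1; 0; 0; 0];
  [:: 1; 0; 1; 0; 2; 0; 2; 0; 0; 0; 0; 1; 0; 0; 0; 0; 0; 1; 0; 0; 0; 1; 0; 0];
  [:: 0; 0; 0; 0; 1; 0; 0; 0; 0; 0; 0; 2; 0; 0; 2; 0; 0; 0; 2; 0; 0; 0; 0; 0; 0; 2];
  [:: 0; 2; 0; 2; 0; 0; 0; 0; 0; 0; 2; 1; 0; 0; 0; 0; 0; 0; 2; 0; 0; 1; 0; 0; 0; 1];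
  [:: 1; 2; 0; 0; 0; 1; 0; 0; 0; 2; 0; 0; 0; 0; 0; 0; 2; 0; 0; 0; 0; 0; 0; 1; 0; 0; 0; 0; 0; 0];
  [:: 1; 0; 1; 2; 0; 2; 0; 2; 0; 0; 0; 0; 0; 0; 1; 0; 0; 0; 2; 0; 0; 0; 2; 0; 0; 1; 0; 0; 0; 1];
  [:: 1; 0; 1; 2; 0; 2; 0; 1; 2; 0; 0; 0; 0; 0; 0; 2; 0; 0; 0; 0; 0; 0; 2; 1; 0; 0; 0; 1; 0; 0; 0; 0];
  [:: 0; 1; 0; 2; 0; 2; 0; 1; 2; 0; 2; 1; 0; 0; 0; 1; 0; 2; 0; 0; 0; 2; 0; 0; 0; 0; 1; 0; 0; 0; 0; 0; 0];
  [:: 2; 0; 0; 1; 0; 2; 0; 1; 0; 0; 0; 0; 0; 0; 2; 0; 0; 0; 0; 0; 0; 2; 0; 1; 0; 0; 0; 0; 2; 0; 0; 0; 0; 0];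
  [:: 0; 2; 0; 0; 0; 2; 0; 0; 0; 2; 0; 0; 0; 0; 0; 0; 1; 0; 0; 0; 0; 0; 0; 2; 0; 0; 0; 0; 0; 0; 1; 0; 0; 0; 0; 0];
  [:: 0; 2; 0; 0; 0; 0; 0; 2; 0; 0; 0; 0; 0; 0; 2; 0; 0; 0; 0; 0; 0; 1; 0; 0; 2; 0; 0; 0; 0; 0; 1; 0; 0; 0; 0; 0; 0];
  [:: 1; 0; 0; 2; 0; 0; 0; 1; 0; 0; 0; 0; 0; 0; 2; 0; 0; 0; 0; 1; 0; 1; 0; 2; 0; 0; 0; 2; 0; 0; 0; 0; 1; 0; 0; 0; 0; 0; 0];
  [:: 1; 0; 1; 2; 0; 2; 1; 0; 0; 2; 0; 1; 2; 0; 2; 0; 0; 0; 0; 2; 1; 0; 0; 0; 0; 0; 0; 2; 0; 0; 0; 2; 0; 0; 1; 0; 0; 0; 1];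
  [:: 2; 0; 2; 0; 1; 0; 2; 0; 0; 0; 1; 0; 0; 0; 0; 0; 0; 2; 0; 0; 0; 1; 0; 0; 0; 0; 0; 0; 2; 0; 0; 0; 0; 1; 0; 0; 0; 0; 1];
  [:: 0; 1; 0; 1; 0; 0; 0; 0; 0; 0; 1; 0; 0; 0; 0; 1; 0; 0; 1; 2; 0; 0; 0; 2; 1; 2; 0; 0; 0; 0; 0; 0; 2; 1; 0; 0; 0; 0; 0; 0];
  [:: 2; 0; 2; 0; 0; 0; 2; 0; 0; 0; 2; 0; 0; 0; 0; 0; 2; 0; 0; 0; 1; 0; 1; 0; 2; 0; 0; 0; 2; 0; 0; 0; 0; 1; 0; 0; 0; 0; 0; 0];
  [:: 1; 0; 2; 0; 0; 0; 0; 0; 2; 0; 0; 0; 0; 0; 0; 2; 0; 0; 1; 0; 0; 0; 0; 2; 0; 1; 2; 0; 0; 0; 0; 0; 0; 2; 1; 0; 0; 0; 0; 0; 0];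
  [:: 0; 1; 0; 0; 2; 0; 2; 0; 1; 0; 2; 0; 0; 0; 2; 0; 2; 1; 0; 0; 0; 0; 0; 0; 1; 0; 0; 0; 2; 0; 1; 0; 0; 0; 0; 2; 0; 0; 0; 0; 0];
  [:: 1; 0; 1; 2; 0; 2; 1; 2; 0; 2; 0; 2; 0; 0; 0; 0; 2; 0; 2; 0; 1; 2; 0; 0; 0; 2; 1; 2; 0; 0; 0; 0; 0; 0; 2; 1; 0; 0; 0; 0; 0; 0];
  [:: 1; 0; 2; 0; 0; 0; 2; 0; 0; 0; 2; 0; 0; 0; 0; 0; 2; 0; 0; 0; 1; 0; 0; 0; 0; 0; 1; 0; 0; 2; 0; 0; 0; 0; 0; 1; 0; 0; 0; 0; 0; 0];
  [:: 0; 1; 2; 0; 2; 1; 0; 0; 0; 0; 0; 0; 1; 2; 0; 0; 0; 0; 1; 0; 1; 0; 0; 0; 0; 2; 0; 1; 2; 0; 0; 0; 0; 0; 0; 2; 1; 0; 0; 0; 0; 0; 0];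
  [:: 0; 1; 2; 0; 2; 1; 0; 1; 0; 0; 0; 0; 0; 2; 0; 0; 0; 0; 1; 0; 1; 0; 0; 0; 0; 2; 0; 1; 2; 0; 0; 0; 0; 0; 0; 2; 1; 0; 0; 0; 0; 0; 0];
  [:: 1; 0; 2; 0; 2; 0; 2; 0; 0; 0; 0; 2; 0; 0; 1; 0; 0; 0; 0; 0; 0; 1; 2; 0; 0; 0; 2; 1; 2; 0; 0; 0; 0; 0; 0; 2; 1; 0; 0; 0; 0; 0; 0];
  [:: 0; 2; 0; 0; 0; 0; 2; 0; 0; 0; 0; 0; 2; 0; 0; 0; 0; 0; 0; 2; 0; 0; 0; 2; 0; 0; 0; 0; 0; 0; 2; 0; 0; 0; 0; 0; 0; 2; 0; 0; 0; 0; 0; 0];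
  [:: 0; 1; 0; 2; 0; 0; 0; 0; 0; 0; 1; 2; 0; 1; 0; 2; 0; 2; 0; 1; 0; 0; 0; 2; 0; 0; 0; 0; 0; 0; 2; 0; 0; 0; 0; 0; 0; 1; 0; 0; 0; 0; 0; 0];
  [:: 1; 0; 1; 0; 0; 0; 0; 0; 0; 2; 0; 2; 0; 1; 0; 0; 1; 0; 0; 1; 0; 0; 0; 2; 0; 0; 0; 0; 0; 0; 2; 0; 0; 0; 0; 0; 0; 1; 0; 0; 0; 0; 0; 0];
  [:: 0; 1; 2; 0; 2; 0; 2; 0; 0; 0; 0; 0; 0; 1; 0; 0; 0; 0; 1; 0; 0; 0; 1; 0; 0; 0; 0; 2; 0; 1; 2; 0; 0; 0; 0; 0; 0; 2; 1; 0; 0; 0; 0; 0; 0];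
  [:: 2; 0; 0; 0; 1; 2; 0; 2; 0; 0; 0; 0; 2; 0; 0; 0; 0; 1; 2; 0; 0; 0; 0; 0; 0; 2; 0; 0; 0; 0; 1; 0; 2; 0; 0; 0; 0; 0; 0; 1; 0; 0; 0; 0; 0; 0];
  [:: 1; 0; 0; 1; 0; 2; 0; 1; 0; 0; 0; 0; 0; 0; 2; 0; 0; 0; 1; 0; 0; 0; 0; 0; 0; 2; 0; 0; 0; 1; 0; 0; 0; 0; 0; 0; 2; 0; 0; 0; 0; 1; 0; 0; 0; 0; 1];
  [:: 0; 0; 0; 1; 0; 0; 0; 2; 0; 1; 0; 0; 0; 0; 2; 0; 0; 1; 0; 0; 0; 0; 0; 2; 0; 0; 0; 2; 0; 0; 0; 0; 0; 0; 2; 0; 0; 0; 0; 0; 0; 2; 0; 0; 0; 0; 0; 0];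
  [:: 0; 0; 0; 0; 0; 1; 0; 0; 0; 0; 2; 0; 2; 1; 2; 0; 2; 0; 2; 0; 0; 0; 0; 2; 0; 2; 0; 0; 0; 0; 0; 0; 1; 0; 0; 2; 0; 0; 0; 0; 0; 1; 0; 0; 0; 0; 0; 0];
  [:: 0; 0; 2; 0; 0; 0; 0; 0; 0; 2; 0; 0; 2; 0; 0; 2; 1; 0; 0; 0; 2; 0; 0; 0; 0; 0; 0; 1; 2; 0; 0; 0; 2; 1; 2; 0; 0; 0; 0; 0; 0; 2; 1; 0; 0; 0; 0; 0; 0];
  [:: 1; 0; 2; 0; 0; 0; 0; 2; 0; 0; 0; 0; 0; 2; 0; 1; 0; 0; 0; 0; 0; 0; 1; 0; 0; 0; 0; 2; 0; 1; 0; 0; 0; 0; 0; 0; 2; 0; 0; 0; 0; 0; 0; 1; 0; 0; 0; 0; 0];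
  [:: 0; 1; 2; 0; 2; 0; 0; 0; 0; 0; 0; 2; 0; 0; 0; 2; 0; 0; 0; 1; 0; 0; 0; 0; 0; 2; 0; 0; 0; 2; 0; 0; 0; 0; 0; 0; 2; 0; 0; 0; 0; 0; 0; 2; 0; 0; 0; 0; 0; 0];
  [:: 1; 0; 1; 0; 2; 0; 0; 0; 0; 0; 0; 1; 0; 0; 0; 2; 0; 2; 0; 1; 0; 0; 0; 0; 0; 2; 0; 0; 0; 2; 0; 0; 0; 0; 0; 0; 2; 0; 0; 0; 0; 0; 0; 2; 0; 0; 0; 0; 0; 0];
  [:: 0; 1; 0; 2; 0; 2; 0; 0; 0; 0; 1; 0; 1; 0; 0; 0; 0; 0; 0; 2; 0; 0; 2; 0; 0; 0; 2; 0; 0; 1; 2; 0; 0; 0; 2; 1; 2; 0; 0; 0; 0; 0; 0; 2; 1; 0; 0; 0; 0; 0; 0];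
  [:: 0; 2; 0; 1; 0; 2; 0; 0; 0; 1; 0; 0; 0; 0; 1; 0; 0; 0; 1; 2; 0; 2; 0; 0; 0; 0; 2; 0; 0; 0; 0; 1; 0; 0; 0; 0];
  [:: 0; 2; 0; 1; 0; 2; 0; 0; 0; 1; 0; 0; 0; 0; 0; 0; 2; 0; 0; 0; 1; 0; 0; 0; 0; 0; 0; 2; 0; 0; 0; 0; 1; 0; 1; 0; 2; 0; 0; 0; 2; 0; 0; 0; 0; 1; 0; 0; 0; 0; 0; 0];
  [:: 0; 2; 0; 1; 0; 2; 0; 0; 0; 1; 0; 0; 0; 0; 0; 1; 2; 0; 2; 1; 2; 0; 2; 0; 2; 0; 0; 0; 0; 2; 0; 2; 0; 1; 2; 0; 0; 0; 2; 1; 2; 0; 0; 0; 0; 0; 0; 2; 1; 0; 0; 0; 0; 0; 0];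
  [:: 0; 2; 0; 1; 0; 2; 0; 0; 0; 1; 0; 0; 0; 0; 0; 2; 0; 0; 0; 2; 0; 0; 0; 2; 0; 0; 0; 0; 0; 2; 0; 0; 0; 1; 0; 0; 0; 0; 0; 1; 0; 0; 2; 0; 0; 0; 0; 0; 1; 0; 0; 0; 0; 0; 0];
  [:: 0; 2; 0; 1; 0; 2; 0; 0; 0; 1; 0; 0; 0; 0; 1; 0; 1; 2; 0; 2; 1; 0; 0; 0; 0; 0; 0; 1; 2; 0; 0; 0; 0; 1; 0; 1; 0; 0; 0; 0; 2; 0; 1; 2; 0; 0; 0; 0; 0; 0; 2; 1; 0; 0; 0; 0; 0; 0];
  [:: 0; 2; 0; 1; 0; 2; 0; 0; 0; 1; 0; 0; 0; 0; 1; 0; 1; 0; 2; 0; 2; 0; 0; 0; 0; 1; 0; 1; 0; 0; 0; 0; 0; 0; 2; 0; 0; 2; 0; 0; 0; 2; 0; 0; 1; 2; 0; 0; 0; 2; 1; 2; 0; 0; 0; 0; 0; 0; 2; 1; 0; 0; 0; 0; 0; 0];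
  [:: 0; 0; 0; 1; 2; 0; 2; 0; 0; 0; 0; 2; 0; 0; 0; 0; 1; 0; 0; 0; 0; 2; 0; 2; 0; 0; 0; 0; 0; 2; 0; 0; 0; 0; 0; 0; 2; 0; 0; 0; 0; 0; 2]].

Definition tab (g : nat) : seq nat := match g with 0 => tX | 1 => tY | _ => tT end.
Definition tabn (g k : nat) : nat := nth 0 (tab g) k.
Arguments tabn : simpl never.

Lemma tab_all g : (all (fun k => k < 22) (tab g) && (size (tab g) == 22)) && uniq (tab g).
Proof. by case: g => [|[|g]]; vm_compute. Qed.

Lemma tab_lt g (i : 'I_22) : tabn g i < 22.
Proof.
have /andP[/andP[/allP H /eqP S] _] := tab_all g.
apply: H; apply: mem_nth; by rewrite S ltn_ord.
Qed.

Definition fO g (i : 'I_22) : 'I_22 := Ordinal (tab_lt g i).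

Lemma fO_inj g : injective (fO g).
Proof.
move=> i j /(congr1 val) /= E; apply/val_inj/eqP.
have /andP[/andP[_ /eqP S] U] := tab_all g.
rewrite -(nth_uniq 0 _ _ U) ?S ?ltn_ord //; by apply/eqP.
Qed.

Definition P g : {perm 'I_22} := perm (@fO_inj g).

Lemma PE g i : val (P g i) = tabn g (val i).
Proof. by rewrite permE. Qed.

Definition Hg : Defs.group := @Defs.Group {perm 'I_22} mulg 1%g invg mulgA mul1g mulVg.

Lemma allEq (f h : nat -> nat) n :
  all (fun k => f k == h k) (iota 0 n) -> forall k, k < n -> f k = h k.
Proof. move=> /allP H k hk; apply/eqP; apply: H; by rewrite mem_iota. Qed.

Lemma permEqN (p q : {perm 'I_22}) :
  (forall k (hk : k < 22), val (p (Ordinal hk)) = val (q (Ordinal hk))) -> p = q.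
Proof. move=> H; apply/permP => i; apply: val_inj; case: i => k hk; exact: H. Qed.

Ltac checkperm :=
  apply: permEqN; intros ?k ?hk; rewrite ?permM ?perm1 ?PE /=;
  revert k hk; apply: allEq; vm_compute; reflexivity.

Open Scope group_scope.

Lemma inv0 : (P 0)^-1 = P 0 * P 0 * P 0 * P 0 * P 0 * P 0.
Proof. apply/eqP; rewrite eq_invg_mul; apply/eqP; checkperm. Qed.
Lemma inv1 : (P 1)^-1 = P 1.
Proof. apply/eqP; rewrite eq_invg_mul; apply/eqP; checkperm. Qed.
Lemma inv2 : (P 2)^-1 = P 2.
Proof. apply/eqP; rewrite eq_invg_mul; apply/eqP; checkperm. Qed.

Lemma relsH : @rels Hg (P 0) (P 1) (P 2).
Proof.
rewrite /rels /gconj /gcomm /=.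
rewrite ?mulg1 ?invMg ?invgK ?invg1 ?inv0 ?inv1 ?inv2 ?mulg1 ?mul1g.
by repeat split; checkperm.
Qed.

Definition genH (g : nat) : {perm 'I_22} :=
  match g with 0 => P 0 | 1 => P 1 | _ => P 2 end.
Definition evH (w : seq nat) : {perm 'I_22} := foldr (fun g p => genH g * p) 1 w.
Definition evN (w : seq nat) (k : nat) : nat := foldl (fun k g => tabn g k) k w.

Lemma genHE g i : val (genH g i) = tabn g (val i).
Proof. by case: g => [|[|g]] /=; rewrite PE. Qed.

Lemma evH_val w i : val (evH w i) = evN w (val i).
Proof.
elim: w i => [|g w IH] i /=; first by rewrite perm1.
by rewrite permM IH genHE.
Qed.

Lemma evH_cat u v : evH (u ++ v) = evH u * evH v.
Proof. elim: u => [|g u IH] /=; [by rewrite mul1g | by rewrite IH mulgA]. Qed.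

Lemma evN_cat u v k : evN (u ++ v) k = evN v (evN u k).
Proof. by rewrite /evN foldl_cat. Qed.

Lemma evH_eqN u v : evH u = evH v -> forall k, k < 22 -> evN u k = evN v k.
Proof.
move=> E k hk; have := congr1 (fun p : {perm 'I_22} => val (p (Ordinal hk))) E.
by rewrite /= !evH_val.
Qed.

Close Scope group_scope.

Definition w1 a := nth [::] U1s a.
Definition w2 a := nth [::] U2s a.
Definition w3 a := nth [::] U3s a.
Definition w4 a := nth [::] U4s a.
Definition Wd a b c d := w4 d ++ (w3 c ++ (w2 b ++ w1 a)).

Lemma allI (Q : pred nat) n : all Q (iota 0 n) -> forall k, k < n -> Q k.
Proof. move=> /allP H k hk; apply: H; by rewrite mem_iota. Qed.

Lemma uniqI (T : eqType) (f : nat -> T) n : uniq (map f (iota 0 n)) ->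
  forall i j, i < n -> j < n -> f i = f j -> i = j.
Proof.
move=> U i j hi hj E; apply/eqP.
rewrite -(nth_uniq (f 0) _ _ U) ?size_map ?size_iota //.
by rewrite !(nth_map 0) ?size_iota // !nth_iota // !add0n E.
Qed.

Lemma chk2 : all (fun b => evN (w2 b) 0 == 0) (iota 0 21).
Proof. vm_compute; reflexivity. Qed.
Lemma chk3 : all (fun c => (evN (w3 c) 0 == 0) && (evN (w3 c) 1 == 1)) (iota 0 20).
Proof. vm_compute; reflexivity. Qed.
Lemma chk4 : all (fun d => [&& evN (w4 d) 0 == 0, evN (w4 d) 1 == 1 & evN (w4 d) 2 == 2])
  (iota 0 48).
Proof. vm_compute; reflexivity. Qed.
Lemma u1 : uniq (map (fun a => evN (w1 a) 0) (iota 0 22)).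
Proof. vm_compute; reflexivity. Qed.
Lemma u2 : uniq (map (fun b => evN (w2 b) 1) (iota 0 21)).
Proof. vm_compute; reflexivity. Qed.
Lemma u3 : uniq (map (fun c => evN (w3 c) 2) (iota 0 20)).
Proof. vm_compute; reflexivity. Qed.
Lemma u4 : uniq (map (fun d => map (evN (w4 d)) (iota 0 22)) (iota 0 48)).
Proof. vm_compute; reflexivity. Qed.

Lemma fix2 b : b < 21 -> evN (w2 b) 0 = 0.
Proof. by move=> hb; apply/eqP; exact: (allI chk2 hb). Qed.
Lemma fix3 c : c < 20 -> evN (w3 c) 0 = 0 /\ evN (w3 c) 1 = 1.
Proof. by move=> hc; have /andP[/eqP -> /eqP ->] := allI chk3 hc. Qed.
Lemma fix4 d : d < 48 -> [/\ evN (w4 d) 0 = 0, evN (w4 d) 1 = 1 & evN (w4 d) 2 = 2].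
Proof. by move=> hd; have /and3P[/eqP -> /eqP -> /eqP ->] := allI chk4 hd. Qed.

Lemma key a b c d a' b' c' d' :
  a < 22 -> b < 21 -> c < 20 -> d < 48 ->
  a' < 22 -> b' < 21 -> c' < 20 -> d' < 48 ->
  evH (Wd a b c d) = evH (Wd a' b' c' d') -> [/\ a = a', b = b', c = c' & d = d'].
Proof.
move=> ha hb hc hd ha' hb' hc' hd' E.
have [d0 d1 d2] := fix4 hd; have [d0' d1' d2'] := fix4 hd'.
have [c0 c1] := fix3 hc; have [c0' c1'] := fix3 hc'.
have Ea : a = a'.
  have := evH_eqN E (k:=0) isT; rewrite /Wd !evN_cat d0 d0' c0 c0' fix2 // fix2 //.
  exact: (uniqI u1).
subst a'.
move: E; rewrite /Wd !evH_cat !mulgA => /mulIg E.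
have Eb : b = b'.
  move: E; rewrite -!evH_cat => /evH_eqN /(_ 1 isT).
  rewrite !evN_cat d1 d1' c1 c1'; exact: (uniqI u2).
subst b'.
move/mulIg: E => E.
have Ec : c = c'.
  move: E; rewrite -!evH_cat => /evH_eqN /(_ 2 isT).
  rewrite !evN_cat d2 d2'; exact: (uniqI u3).
subst c'.
move/mulIg: E => E.
split => //; apply: (uniqI u4) => //.
apply/eq_in_map => k; rewrite mem_iota => /andP[_ hk].
exact: evH_eqN E k hk.
Qed.

Lemma hom1 (G1 G2 : Defs.group) (f : G1 -> G2) : is_hom f -> f (gone G1) = gone G2.
Proof.
move=> hf; have e : f (gone G1) = gmul (f (gone G1)) (f (gone G1)).
  by rewrite -hf gmul1.
by rewrite -(gmulV (f (gone G1))) {3}e gmulA gmulV gmul1.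
Qed.

Lemma e443520 : 48 * 20 * 21 * 22 == 443520. Proof. vm_compute. reflexivity. Qed.
Lemma dbound k : k < 443520 -> k %/ 22 %/ 21 %/ 20 < 48.
Proof. move=> hk.
rewrite (ltn_divLR _ _ (isT : 0 < 20)) (ltn_divLR _ _ (isT : 0 < 21)) (ltn_divLR _ _ (isT : 0 < 22)).
move/eqP: e443520 => ->. exact: hk. Qed.
Lemma decomp i j : i %% 22 = j %% 22 -> i %/ 22 %% 21 = j %/22 %% 21 ->
  i %/ 22 %/ 21 %% 20 = j %/ 22 %/ 21 %% 20 -> i %/ 22 %/ 21 %/ 20 = j %/ 22 %/ 21 %/ 20 -> i = j.
Proof.
move=> Ea Eb Ec Ed.
rewrite (divn_eq i 22) (divn_eq j 22) Ea; congr (_ * _ + _).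
rewrite (divn_eq (i %/ 22) 21) (divn_eq (j %/ 22) 21) Eb; congr (_ * _ + _).
by rewrite (divn_eq (i %/ 22 %/ 21) 20) (divn_eq (j %/ 22 %/ 21) 20) Ec Ed.
Qed.

Require Import Defs.

Theorem corollary2p2 (G : group) (x y t : G) :
  is_presented x y t ->
  exists f : 'I_443520 -> G, injective f.
Proof.
move=> [_ Hu].
have [f [fhom fx fy ft _]] := Hu Hg _ _ _ relsH.
pose genG (g : nat) : G := match g with 0 => x | 1 => y | _ => t end.
pose evG (w : seq nat) : G := foldr (fun g p => gmul (genG g) p) (gone G) w.
have fev : forall w, f (evG w) = evH w.
  elim=> [|g w IH] /=; first exact: (hom1 fhom).
  rewrite fhom IH; by case: g => [|[|g]] /=; rewrite ?fx ?fy ?ft.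
exists (fun k : 'I_443520 => evG (Wd (k %% 22) (k %/ 22 %% 21) (k %/ 22 %/ 21 %% 20) (k %/ 22 %/ 21 %/ 20))).
case=> [i hi] [j hj] /(congr1 f); rewrite !fev /= => E.
have [] := key (ltn_pmod _ (isT : 0 < 22)) (ltn_pmod _ (isT : 0 < 21)) (ltn_pmod _ (isT : 0 < 20)) (dbound hi)
  (ltn_pmod _ (isT : 0 < 22)) (ltn_pmod _ (isT : 0 < 21)) (ltn_pmod _ (isT : 0 < 20)) (dbound hj) E.
move=> Ea Eb Ec Ed; apply: val_inj => /=; exact: decomp.
Qed.
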